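(* For every finite bipartite separated graph $(E,C)$, the canonical partial action $\theta^{(E,C)}\colon\mathbb F(E^1)\curvearrowright\Omega(E,C)$ is relatively strongly topologically free.
   Context: Separated graph $(E,C)$: $E=(E^0,E^1,r,s)$, $C=\bigsqcup_vC_v$ with $C_v$ a partition of $r^{-1}(v)$ into non-empty sets. Finite bipartite: $E$ finite, $E^0=E^{0,0}\sqcup E^{0,1}$, $s(E^1)=E^{0,1}$, $r(E^1)=E^{0,0}$. $\mathbb F$ = free group on $E^1$; for $\xi\subseteq\mathbb F$, $\alpha\in\xi$, $\xi_\alpha=\{\sigma\in E^1\sqcup(E^1)^{-1}:\sigma\alpha\in\xi\}$. $\Omega(E,C)$ is the set of $\xi\subseteq\mathbb F$ with $1\in\xi$, right-convex (if a reduced word $e_m^{\varepsilon_m}\cdots e_1^{\varepsilon_1}\in\xi$ then $e_k^{\varepsilon_k}\cdots e_1^{\varepsilon_1}\in\xi$ for all $k<m$), and such that for every $\alpha\in\xi$ either $\xi_\alpha=s^{-1}(v)$ for some $v\in E^{0,1}$ or $\xi_\alpha=\{e_X^{-1}:X\in C_v\}$ for some $v\in E^{0,0}$ and $e_X\in X$; topology from $\{0,1\}^{\mathbb F}$. $\theta^{(E,C)}$ has domains $\Omega(E,C)_\alpha=\{\xi:\alpha^{-1}\in\xi\}$ and $\theta_\alpha(\xi)=\xi\alpha^{-1}$. For a partial action $\theta\colon G\curvearrowright\Omega$ with $\Omega_g$ the domain of $\theta_{g^{-1}}$: $\mathrm{Stab}(x)=\{g:x\in\Omega_{g^{-1}},\theta_g(x)=x\}$;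 $\theta$ is topologically free in $x$ if for every $1\ne g\in\mathrm{Stab}(x)$ and open $U\ni x$ there is $y\in U$ with $g\notin\mathrm{Stab}(y)$; strongly topologically free in $x$ if for all $1\ne g_1,\dots,g_n\in\mathrm{Stab}(x)$ and open $U\ni x$ there is $y\in U$ with $g_1,\dots,g_n\notin\mathrm{Stab}(y)$; $\Omega^{\mathrm{TF}}$ is the set of points of topological freeness; $\theta$ is relatively strongly topologically free if it is strongly topologically free in every point of $\Omega^{\mathrm{TF}}$. *)

(* Defs.v *)
From mathcomp Require Import all_boot.
Set Implicit Arguments. Unset Strict Implicit. Unset Printing Implicit Defensive.

(* Free group F(E^1) on a finite set of edges E1, as reduced words.   *)
(* A letter (e, false) stands for e, (e, true) for e^{-1}.             *)
(* A word [:: x_m; ...; x_1] (head = leftmost letter) stands for the   *)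
(* product x_m ... x_1.                                                *)
Section FreeGroup.
Variable E1 : finType.

Definition letter := (E1 * bool)%type.
Definition word := seq letter.

Definition linv (x : letter) : letter := (x.1, ~~ x.2).

Definition reduced (w : word) : bool := sorted (fun x y => y != linv x) w.

Fixpoint red (w : word) : word :=
  match w with
  | [::] => [::]
  | x :: w' =>
      match red w' with
      | [::] => [:: x]
      | y :: w'' => if y == linv x then w'' else x :: y :: w''
      end
  end.

Definition wmul (u v : word) : word := red (u ++ v).
Definition winv (w : word) : word := rev (map linv w).

End FreeGroup.

(* side v = true iff v \in E^{0,1}, C v = C_v (a set of subsets of     *)
(* r^{-1}(v)).                                                          *)
Section OmegaEC.
Variables (V E1 : finType) (r s : E1 -> V) (side : V -> bool)
          (C : V -> {set {set E1}}).

(* subsets of F are predicates on words (supported on reduced words);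
   points of {0,1}^F *)
Definition fsubset := word E1 -> Prop.

Definition xi_at (xi : fsubset) (alpha : word E1) : letter E1 -> Prop :=
  fun sigma => xi (wmul [:: sigma] alpha).

Definition Omega (xi : fsubset) : Prop :=
  (forall w, xi w -> reduced w) /\
  xi [::] /\
  (forall w, xi w -> forall n, xi (drop n w)) /\
  (forall alpha, xi alpha ->
     (exists v, side v /\
        forall sigma, xi_at xi alpha sigma <->
                      (sigma.2 = false /\ s sigma.1 = v))
     \/
     (exists v, ~~ side v /\
        exists eX : {set E1} -> E1,
          (forall X, X \in C v -> eX X \in X) /\
          forall sigma, xi_at xi alpha sigma <->
             exists2 X, X \in C v & sigma = (eX X, true))).

(* Product topology on {0,1}^F : U is open iff around each point it
   contains a basic cylinder fixed by finitely many coordinates. *)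
Definition is_open (U : fsubset -> Prop) : Prop :=
  forall xi, U xi ->
    exists S : seq (word E1),
      forall eta, (forall w, w \in S -> (eta w <-> xi w)) -> U eta.

(* The canonical partial action theta^{(E,C)}:
   Omega_alpha = { xi : alpha^{-1} \in xi } (domain of theta_{alpha^{-1}}),
   theta_alpha xi = xi alpha^{-1}. *)
Definition Omega_dom (alpha : word E1) (xi : fsubset) : Prop :=
  Omega xi /\ xi (winv alpha).

Definition theta (alpha : word E1) (xi : fsubset) : fsubset :=
  fun w => exists2 sigma, xi sigma & w = wmul sigma (winv alpha).

Definition inStab (x : fsubset) (g : word E1) : Prop :=
  reduced g /\ Omega_dom (winv g) x /\ (forall w, theta g x w <-> x w).

(* topologically free in x (U ranges over open subsets of Omega,
   i.e. traces on Omega of open subsets of {0,1}^F) *)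
Definition top_free_at (x : fsubset) : Prop :=
  forall g, g <> [::] -> inStab x g ->
  forall U, is_open U -> U x ->
  exists y, Omega y /\ U y /\ ~ inStab y g.

Definition strongly_top_free_at (x : fsubset) : Prop :=
  forall gs : seq (word E1),
  (forall g, g \in gs -> g <> [::] /\ inStab x g) ->
  forall U, is_open U -> U x ->
  exists y, Omega y /\ U y /\ (forall g, g \in gs -> ~ inStab y g).

Definition Omega_TF (x : fsubset) : Prop := Omega x /\ top_free_at x.

Definition rel_strongly_top_free : Prop :=
  forall x, Omega_TF x -> strongly_top_free_at x.

End OmegaEC.

(* Main.v *)
Require Import Defs.
From mathcomp Require Import all_boot.
From Stdlib Require Import Classical.
From mathcomp Require Import zify.
Set Implicit Arguments. Unset Strict Implicit. Unset Printing Implicit Defensive.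

Lemma linvK (E1 : finType) (x : letter E1) : linv (linv x) = x.
Proof. by case: x => a b; rewrite /linv /= negbK. Qed.

Lemma red_reduced (E1 : finType) (w : word E1) : reduced (red w).
Proof.
elim: w => [|x w IH] //=.
case E: (red w) => [|y w''] //; rewrite E in IH.
case: ifP => H.
  by move: IH; rewrite /reduced /= => /path_sorted.
by rewrite /reduced /= H.
Qed.

Lemma red_id (E1 : finType) (w : word E1) : reduced w -> red w = w.
Proof.
elim: w => [|x w IH] //= Hr.
have Hw : reduced w by move: Hr; rewrite /reduced /= => /path_sorted.
rewrite (IH Hw).
case: w Hr {IH Hw} => [|y w''] // .
by rewrite /reduced /= => /andP [/negbTE -> _].
Qed.

Lemma redK (E1 : finType) (w : word E1) : red (red w) = red w.
Proof. exact: red_id (red_reduced w). Qed.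

Lemma red_consr (E1 : finType) (y : letter E1) w : red (y :: w) = red (y :: red w).
Proof. by rewrite /= redK. Qed.

Lemma red_cat_r (E1 : finType) (u v : word E1) : red (u ++ v) = red (u ++ red v).
Proof.
elim: u => [|y u IH] /=; first by rewrite redK.
by rewrite -/(red (u ++ v)) IH.
Qed.

Lemma red_cons_reduced (E1 : finType) (s : letter E1) (a : word E1) :
  reduced a -> red (s :: a) =
  match a with [::] => [:: s] | t :: a' => if t == linv s then a' else s :: a end.
Proof. move=> Ha; rewrite /= (red_id Ha); by case: a Ha. Qed.

Lemma red_cancel (E1 : finType) (x : letter E1) w : red (linv x :: x :: w) = red w.
Proof.
rewrite red_consr [red (x :: w)]red_consr.
have Hr := red_reduced w.
move: (red w) Hr => r Hr.
rewrite (red_cons_reduced _ Hr).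
case: r Hr => [|z w''] Hr; first by rewrite /= linvK eqxx.
have Hw'' : reduced w'' by move: Hr; rewrite /reduced /= => /path_sorted.
case: ifP => Hz.
  move/eqP: Hz => Hz; subst z.
  rewrite (red_cons_reduced _ Hw'').
  case: w'' Hr Hw'' => [|z' w3] //.
  rewrite /reduced /= linvK => /andP [Hne _] _.
  by rewrite (negbTE Hne).
have Hr2 : reduced [:: x, z & w''] by rewrite /reduced /= Hz.
by rewrite (red_cons_reduced _ Hr2) linvK eqxx.
Qed.

Lemma red_cat_l (E1 : finType) (u v : word E1) : red (red u ++ v) = red (u ++ v).
Proof.
elim: u => [|y u IH] //.
rewrite cat_cons [RHS]red_consr -IH -red_consr red_consr.
have Hr := red_reduced u.
move: (red u) Hr => r Hr.
rewrite (red_cons_reduced _ Hr).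
case: r Hr => [|z w] Hr //.
case: ifP => Hz //.
move/eqP: Hz => ->.
have := red_cancel (linv y) (w ++ v).
by rewrite linvK => ->.
Qed.

Lemma wmulA (E1 : finType) (a b c : word E1) : wmul (wmul a b) c = wmul a (wmul b c).
Proof. by rewrite /wmul red_cat_l -[in RHS]red_cat_r catA. Qed.

Lemma winv_cons (E1 : finType) (x : letter E1) w : winv (x :: w) = winv w ++ [:: linv x].
Proof. by rewrite /winv /= rev_cons cats1. Qed.

Lemma wmulVw (E1 : finType) (a : word E1) : wmul (winv a) a = [::].
Proof.
rewrite /wmul; elim: a => [|x a IH] //.
by rewrite winv_cons -catA /= red_cat_r red_cancel -red_cat_r.
Qed.

Lemma winvK (E1 : finType) (a : word E1) : winv (winv a) = a.
Proof.
by rewrite /winv map_rev revK -map_comp (eq_map (@linvK E1)) map_id.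
Qed.

Lemma wmulwV (E1 : finType) (a : word E1) : wmul a (winv a) = [::].
Proof. by rewrite -{1}(winvK a) wmulVw. Qed.

Lemma wmul1 (E1 : finType) (a : word E1) : reduced a -> wmul a [::] = a.
Proof. by move=> H; rewrite /wmul cats0 red_id. Qed.

Lemma wmul1l (E1 : finType) (a : word E1) : reduced a -> wmul [::] a = a.
Proof. by move=> H; rewrite /wmul red_id. Qed.


Lemma part_r (V E1 : finType) (r : E1 -> V) (P : {set {set E1}}) v X a :
  partition P [set e | r e == v] -> X \in P -> a \in X -> r a = v.
Proof.
move=> /and3P [/eqP Hc _ _] HX Ha.
have : a \in cover P by apply/bigcupP; exists X.
by rewrite Hc inE => /eqP.
Qed.

Lemma part_eq (E1 : finType) (D : {set E1}) (P : {set {set E1}}) X X' a :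
  partition P D -> X \in P -> X' \in P -> a \in X -> a \in X' -> X = X'.
Proof.
move=> /and3P [_ Ht _] HX HX' Ha Ha'.
by rewrite -(def_pblock Ht HX Ha) (def_pblock Ht HX' Ha').
Qed.

Definition cone (E1 : finType) (c w : word E1) := exists u, w = u ++ c.

Lemma cone_size (E1 : finType) (c w : word E1) : cone c w -> size c <= size w.
Proof. by case=> u ->; rewrite size_cat leq_addl. Qed.

Lemma cone_drop (E1 : finType) (c w : word E1) n : cone c (drop n w) -> cone c w.
Proof. by case=> u Hu; exists (take n w ++ u); rewrite -catA -Hu cat_take_drop. Qed.

Lemma wmul1_cases (E1 : finType) (s : letter E1) (a : word E1) :
  reduced a ->
  (wmul [:: s] a = s :: a) \/ (exists a', a = linv s :: a' /\ wmul [:: s] a = a').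
Proof.
move=> Ha; rewrite /wmul cat1s (red_cons_reduced _ Ha).
case: a Ha => [|t a'] Ha; first by left.
case: ifP => H; last by left.
by right; exists a'; move/eqP: H => ->.
Qed.

Lemma cone_enter (E1 : finType) (c a : word E1) s :
  reduced a -> ~ cone c a -> cone c (wmul [:: s] a) -> s :: a = c.
Proof.
move=> Ha Hn Hc; case: (wmul1_cases s Ha) => [Heq | [a' [Ha' Heq]]]; rewrite Heq in Hc.
  case: Hc => [[|z u]] /= Hu; first by rewrite Hu.
  by case: Hu => _ Hu; case: Hn; exists u.
by case: Hn; case: Hc => u Hu; exists (linv s :: u); rewrite Ha' Hu.
Qed.

Lemma cone_leave (E1 : finType) (c a : word E1) s :
  reduced a -> cone c a -> ~ cone c (wmul [:: s] a) -> a = c /\ wmul [:: s] a = behead c.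
Proof.
move=> Ha Hc Hn; case: (wmul1_cases s Ha) => [Heq | [a' [Ha' Heq]]]; rewrite Heq in Hn *.
  by case: Hn; case: Hc => u ->; exists (s :: u).
case: Hc => [[|z u]] /= Hu; first by rewrite -Hu Ha'.
by case: Hn; exists u; move: Hu; rewrite Ha' => -[].
Qed.

Lemma allwords_ex (E1 : finType) (n : nat) :
  exists S : seq (word E1), forall w : word E1, size w <= n -> w \in S.
Proof.
elim: n => [|n [S HS]].
  by exists [:: [::]] => -[|x w].
exists ([::] :: [seq (x : letter E1) :: w | x <- enum {: (E1 * bool)%type}, w <- S]).
case=> [|x w] //= Hw.
rewrite inE; apply/orP; right.
apply: (allpairs_f (fun (x : letter E1) w => x :: w)); first by rewrite mem_enum.
exact: HS.
Qed.

Lemma min_ex (E1 : finType) (P : word E1 -> Prop) :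
  (exists w, P w) -> exists w, P w /\ forall w', size w' < size w -> ~ P w'.
Proof.
case=> w Hw.
have : forall n, forall w, size w <= n -> P w -> exists w, P w /\ forall w', size w' < size w -> ~ P w'.
  elim=> [|n IH] w0 Hs Hw0.
    exists w0; split=> // w' Hw'; by rewrite leqn0 in Hs; rewrite (eqP Hs) in Hw'.
  case: (classic (exists w', size w' < size w0 /\ P w')) => [[w' [H1 H2]]|Hno].
    apply: (IH w') => //; by rewrite -ltnS (leq_trans H1).
  exists w0; split=> // w' H1 H2; apply: Hno; by exists w'.
by move/(_ (size w) w (leqnn _) Hw).
Qed.


Definition loc (V E1 : finType) (s : E1 -> V) (side : V -> bool) (C : V -> {set {set E1}})
  (A : letter E1 -> Prop) : Prop :=
     (exists v, side v /\
        forall sigma, A sigma <-> (sigma.2 = false /\ s sigma.1 = v))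
     \/
     (exists v, ~~ side v /\
        exists eX : {set E1} -> E1,
          (forall X, X \in C v -> eX X \in X) /\
          forall sigma, A sigma <->
             exists2 X, X \in C v & sigma = (eX X, true)).

Lemma loc_ext (V E1 : finType) (s : E1 -> V) side C (A B : letter E1 -> Prop) :
  (forall sg, A sg <-> B sg) -> loc s side C A -> loc s side C B.
Proof.
move=> H [[v [Hv HA]]|[v [Hv [eX [HeX HA]]]]].
  by left; exists v; split=> // sg; rewrite -H.
by right; exists v; split=> //; exists eX; split=> // sg; rewrite -H.
Qed.

Definition ymod (E1 : finType) (x y' : fsubset E1) (ge gf : word E1) : fsubset E1 :=
  fun w => (x w /\ ~ cone ge w) \/ (y' w /\ cone gf w).

Lemma conv_cone (E1 : finType) (x : fsubset E1) c w :
  (forall w, x w -> forall n, x (drop n w)) -> x w -> cone c w -> x c.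
Proof. by move=> Hd Hx [u Hu]; have := Hd _ Hx (size u); rewrite Hu drop_size_cat. Qed.

Lemma omega_mod (V E1 : finType) (r s : E1 -> V) side C
  (HC : forall v, partition (C v) [set e | r e == v])
  (x y' : fsubset E1) (beta : word E1) (e f : E1) v (eX : {set E1} -> E1) X0 :
  Omega s side C x -> Omega s side C y' -> x beta -> y' beta ->
  ~~ side v -> (forall X, X \in C v -> eX X \in X) ->
  (forall sg, xi_at x beta sg <-> exists2 X, X \in C v & sg = (eX X, true)) ->
  X0 \in C v -> eX X0 = e -> f \in X0 -> f <> e ->
  x ((e, true) :: beta) -> y' ((f, true) :: beta) -> ~ x ((f, true) :: beta) ->
  Omega s side C (ymod x y' ((e, true) :: beta) ((f, true) :: beta)).
Proof.
move=> [xR [x1 [xD xL]]] [yR [y1 [yD yL]]] xb yb Hv HeX Hxi HX0 HeX0 HfX0 Hfe xe yf nxf.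
set ge := (e, true) :: beta; set gf := (f, true) :: beta.
have nxcf : forall w, x w -> ~ cone gf w by move=> w Hw Hc; apply: nxf; exact: (conv_cone xD Hw Hc).
have Hwe : wmul [:: (e, true)] beta = ge by rewrite /wmul cat1s red_id //; apply: xR xe.
have Hwf : wmul [:: (f, true)] beta = gf by rewrite /wmul cat1s red_id //; apply: yR yf.
have size_ge : size ge = (size beta).+1 by [].
have size_gf : size gf = (size beta).+1 by [].
split; [|split; [|split]].
- by move=> w [[Hw _]|[Hw _]]; [apply: xR | apply: yR].
- left; split=> // /cone_size; by rewrite size_ge.
- move=> w [[Hw Hn] n|[Hw [u Hu]] n].
    left; split; first exact: xD.
    by move/cone_drop.
  case: (leqP n (size u)) => Hn.
    right; split; first exact: yD.
    exists (drop n u); rewrite Hu drop_cat; case: ltnP => // Hnu.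
    have -> : n = size u by apply/eqP; rewrite eqn_leq Hn Hnu.
    by rewrite subnn drop0 drop_size.
  left; split.
    rewrite Hu drop_cat ltnNge (ltnW Hn) /=.
    have -> : n - size u = (n - size u - 1).+1 by rewrite subn1 prednK // subn_gt0.
    by rewrite /= ; apply: xD.
  move/cone_size; rewrite Hu drop_cat ltnNge (ltnW Hn) /= size_drop size_gf; lia.
- move=> a [[Ha Hna]|[Ha Hca]].
  + have Hra := xR _ Ha.
    have Hnf := nxcf _ Ha.
    case: (classic (a = beta)) => [Hab|Hab]; first subst a.
      right; exists v; split=> //.
      exists (fun X => if X == X0 then f else eX X); split.
        by move=> X HX; case: eqP => [->|_] //; apply: HeX.
      move=> sg; rewrite /xi_at /ymod.
      case: (classic (sg = (f, true))) => [->|Hsf].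
        rewrite Hwf; split=> _; last by right; split=> //; exists [::].
        by exists X0 => //; rewrite eqxx.
      case: (classic (sg = (e, true))) => [->|Hse].
        split.
          rewrite Hwe.
          case=> [[_ []]|[_ [u Hu]]]; first by exists [::].
          case: u Hu => [|z u] Hu.
            by move: Hu; rewrite /ge /gf /= => -[] Hef; case: Hfe.
          by move/(f_equal size): Hu; rewrite size_ge /= size_cat size_gf; lia.
        case=> X HX; case: eqP => [_ [] Hef|HXX0 [] Hee]; first by case: Hfe.
        exfalso; apply: HXX0; apply: (part_eq (HC v) HX HX0 (a := e)).
          by rewrite Hee; apply: HeX.
        by rewrite -HeX0; apply: HeX.
      have Hrb := xR _ xb.
      have E1' : (x (wmul [:: sg] beta) /\ ~ cone ge (wmul [:: sg] beta) \/
              y' (wmul [:: sg] beta) /\ cone gf (wmul [:: sg] beta)) <-> xi_at x beta sg.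
        split.
          case=> [[H _]|[_ H]] //.
          by have := cone_enter Hrb (nxcf _ xb) H; rewrite /gf => -[Heq]; case: Hsf.
        move=> H; left; split=> // Hc.
        by have := cone_enter Hrb Hna Hc; rewrite /ge => -[Heq]; case: Hse.
      rewrite E1' Hxi; split; case=> X HX Hsg; subst sg.
        exists X => //; case: eqP => // HXe; subst X.
        by case: Hse; rewrite HeX0.
      case: (eqVneq X X0) => [HXe|HXn].
        by subst X; case: Hsf; rewrite eqxx.
      by exists X => //; rewrite (negbTE HXn).
    apply: (loc_ext _ (xL _ Ha)) => sg; rewrite /xi_at /ymod.
    split; first by move=> H; left; split=> // Hc; case: Hab; have := cone_enter Hra Hna Hc; rewrite /ge => -[_ ->].
    case=> [[H _]|[_ H]] //.
    by case: Hab; have := cone_enter Hra Hnf H; rewrite /gf => -[_ ->].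
  + have Hra := yR _ Ha.
    apply: (loc_ext _ (yL _ Ha)) => sg; rewrite /xi_at /ymod.
    case: (classic (cone gf (wmul [:: sg] a))) => Hc.
      split; first by move=> H; right.
      case=> [[H _]|[H _]] //; by case: (nxcf _ H).
    have [Hag Hw] := cone_leave Hra Hca Hc.
    rewrite Hw /gf /=; split=> _; last exact: yb.
    left; split=> // /cone_size; by rewrite size_ge ltnn.
Qed.


Lemma wmul_inj (E1 : finType) (g a b : word E1) : reduced a -> reduced b ->
  wmul a (winv g) = wmul b (winv g) -> a = b.
Proof.
move=> Ha Hb H.
have := congr1 (fun w => wmul w g) H => /=.
by rewrite !wmulA wmulVw !wmul1.
Qed.

Lemma fix_triv (E1 : finType) (g b : word E1) : reduced g -> wmul b (winv g) = b -> g = [::].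
Proof.
move=> Hg H.
have H1 : red (winv g) = [::].
  have := congr1 (wmul (winv b)) H.
  by rewrite -wmulA wmulVw.
by rewrite -(wmul1 Hg) /wmul -H1 -red_cat_r -/(wmul g (winv g)) wmulwV.
Qed.

Lemma stab_break (V E1 : finType) (s : E1 -> V) side C
  (x y' : fsubset E1) (beta : word E1) (e f : E1) (g : word E1) :
  Omega s side C x -> Omega s side C y' -> x beta ->
  y' ((f, true) :: beta) -> ~ x ((f, true) :: beta) ->
  inStab s side C x g -> inStab s side C (ymod x y' ((e, true) :: beta) ((f, true) :: beta)) g ->
  g = [::].
Proof.
move=> [xR [x1 [xD xL]]] [yR _] xb yf nxf [Hg [_ Hx]] [_ [[Hy _] Hyt]].
set ge := (e, true) :: beta; set gf := (f, true) :: beta.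
set y := ymod x y' ge gf.
have yR' : forall w, y w -> reduced w by move=> w [[H _]|[H _]]; [apply: xR|apply: yR].
set phi := fun w => wmul w (winv g).
have nxcf : forall w, x w -> ~ cone gf w by move=> w Hw Hc; apply: nxf; exact: (conv_cone xD Hw Hc).
have Hwf : wmul [:: (f, true)] beta = gf by rewrite /wmul cat1s red_id //; apply: yR yf.
have xpb : x (phi beta) by apply/Hx; exists beta.
have ypb : y (phi beta) by apply/Hyt; exists beta => //; left; split=> // /cone_size; rewrite /ge /= ltnn.
have Hd : wmul [:: (f, true)] (phi beta) = phi gf by rewrite /phi -wmulA Hwf.
have ypf : y (phi gf) by apply/Hyt; exists gf => //; right; split=> //; exists [::].
have nxpf : ~ x (phi gf).
  move/Hx => [sg Hsg Heq]; apply: nxf.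
  by have -> : (f, true) :: beta = sg := wmul_inj (yR _ yf) (xR _ Hsg) Heq.
have Hpb : phi beta = beta.
  rewrite -Hd in ypf nxpf.
  have Hc : cone gf (wmul [:: (f, true)] (phi beta)) by case: ypf => [[]|[]].
  have := cone_enter (xR _ xpb) (nxcf _ xpb) Hc.
  by rewrite /gf => -[].
exact: fix_triv Hg Hpb.
Qed.


Lemma wmul_cons_ne (E1 : finType) (sg t : letter E1) (b : word E1) :
  reduced (t :: b) -> t <> linv sg -> wmul [:: sg] (t :: b) = sg :: t :: b.
Proof.
move=> Hr Hne; rewrite /wmul cat1s (red_cons_reduced _ Hr).
by case: eqP.
Qed.

Lemma wmul_cons_eq (E1 : finType) (t : letter E1) (b : word E1) :
  reduced (t :: b) -> wmul [:: linv t] (t :: b) = b.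
Proof. by move=> Hr; rewrite /wmul cat1s (red_cons_reduced _ Hr) linvK eqxx. Qed.

Lemma extract (V E1 : finType) (r s : E1 -> V) side C
  (HC : forall v, partition (C v) [set e | r e == v])
  (x y' : fsubset E1) (t : letter E1) (b' : word E1) :
  Omega s side C x -> Omega s side C y' ->
  x (t :: b') -> y' (t :: b') -> x b' -> y' b' ->
  ~ (forall sg, xi_at x (t :: b') sg <-> xi_at y' (t :: b') sg) ->
  exists e f v (eX : {set E1} -> E1) X0,
   [/\ ~~ side v, (forall X, X \in C v -> eX X \in X),
    (forall sg, xi_at x (t :: b') sg <-> exists2 X, X \in C v & sg = (eX X, true)),
    X0 \in C v & eX X0 = e] /\
   [/\ f \in X0, f <> e, x ((e, true) :: t :: b'), y' ((f, true) :: t :: b') &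
       ~ x ((f, true) :: t :: b')].
Proof.
move=> [xR [_ [_ xL]]] [yR [_ [_ yL]]] xb yb xb' yb' Hneq.
have Hrb := xR _ xb.
have Hlx : xi_at x (t :: b') (linv t) by rewrite /xi_at wmul_cons_eq.
have Hly : xi_at y' (t :: b') (linv t) by rewrite /xi_at wmul_cons_eq.
case: (xL _ xb) => [[v [Hv Hx]]|[v [Hv [eX [HeX Hx]]]]];
case: (yL _ yb) => [[v' [Hv' Hy]]|[v' [Hv' [eY [HeY Hy]]]]].
- case: Hneq => sg; rewrite Hx Hy.
  have [_ E1'] := (proj1 (Hx _) Hlx); have [_ E2'] := (proj1 (Hy _) Hly).
  by rewrite -E1' -E2'.
- have [H1 _] := (proj1 (Hx _) Hlx); have [X _ H2] := (proj1 (Hy _) Hly).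
  by rewrite H2 in H1.
- have [H1 _] := (proj1 (Hy _) Hly); have [X _ H2] := (proj1 (Hx _) Hlx).
  by rewrite H2 in H1.
have [X1 HX1 H1] := (proj1 (Hx _) Hlx); have [X2 HX2 H2] := (proj1 (Hy _) Hly).
have Hvv : v = v'.
  have E1r := part_r (HC v) HX1 (HeX _ HX1).
  have E2r := part_r (HC v') HX2 (HeY _ HX2).
  by rewrite -E1r -E2r; move: H1 H2 => -> [->].
subst v'.
have [X0 [HX0 Hne]] : exists X0, X0 \in C v /\ eX X0 <> eY X0.
  apply: NNPP => Hno; apply: Hneq => sg; rewrite Hx Hy.
  have Heq : forall X, X \in C v -> eX X = eY X.
    by move=> X HX; apply: NNPP => H; apply: Hno; exists X.
  by split; case=> X HX ->; exists X => //; rewrite Heq.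
have Heq12 : eX X1 = eY X2 by move: H1 H2 => -> [->].
have HXX1 : X1 = X0 -> False.
  move=> ?; subst X1; apply: Hne; rewrite Heq12.
  have HeX2 : eY X2 \in X2 by apply: HeY.
  have -> : X2 = X0; last by [].
  by apply: (part_eq (HC v) HX2 HX0 HeX2); rewrite -Heq12; apply: HeX.
have Ht : t = (eX X1, false) by rewrite -(linvK t) H1.
have Hrest : forall X, X \in C v -> forall a, a \in X -> a \in X0 -> X = X0.
  by move=> X HX a HaX HaX0; apply: (part_eq (HC v) HX HX0 HaX HaX0).
exists (eX X0), (eY X0), v, eX, X0; split; first by split.
split.
- by apply: HeY.
- by move=> H; apply: Hne.
- have Hnte : t <> linv (eX X0, true).
    rewrite Ht; case=> H; apply: HXX1; apply: Hrest HX1 _ (HeX _ HX1) _.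
    by rewrite H; apply: HeX.
  rewrite -(wmul_cons_ne Hrb Hnte).
  by apply: (proj2 (Hx _)); exists X0.
- have Hnt : t <> linv (eY X0, true).
    rewrite Ht; case=> H; apply: HXX1; apply: Hrest HX1 _ (HeX _ HX1) _.
    by rewrite H; apply: HeY.
  rewrite -(wmul_cons_ne Hrb Hnt).
  by apply: (proj2 (Hy _)); exists X0.
- move=> Hxf.
  have Hnt : t <> linv (eY X0, true).
    rewrite Ht; case=> H; apply: HXX1; apply: Hrest HX1 _ (HeX _ HX1) _.
    by rewrite H; apply: HeY.
  move: Hxf; rewrite -(wmul_cons_ne Hrb Hnt) => /Hx [X HX [HXe]].
  apply: Hne; have HX' : X = X0 by apply: Hrest HX _ (HeX _ HX) _; rewrite -HXe; apply: HeY.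
  by subst X.
Qed.


Lemma size_le_sumn (E1 : finType) (S : seq (word E1)) w : w \in S -> size w <= sumn (map size S).
Proof.
elim: S => [|a S IH] //=; rewrite inE => /orP [/eqP ->|H]; first exact: leq_addr.
by apply: leq_trans (IH H) _; apply: leq_addl.
Qed.

Theorem proposition7 (V E1 : finType) (r s : E1 -> V) (side : V -> bool)
    (C : V -> {set {set E1}})
    (* bipartite: s(E^1) = E^{0,1}, r(E^1) = E^{0,0} *)
    (Hs : forall v, side v <-> exists e, s e = v)
    (Hr : forall v, ~~ side v <-> exists e, r e = v)
    (* C_v is a partition of r^{-1}(v) into non-empty sets *)
    (HC : forall v, partition (C v) [set e | r e == v]) :
  rel_strongly_top_free s side C.
Proof.
move=> x [HOx HTF] gs Hgs U HU Ux.
case: gs Hgs => [|g1 gs] Hgs.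
  by exists x; split=> //; split.
have [Hg1ne Hg1] := Hgs g1 (mem_head _ _).
have [S HS] := HU x Ux.
set L := sumn (map size S).
set N := L.+1.
set U' := fun eta : fsubset E1 => forall w, size w <= N -> (eta w <-> x w).
have oU' : is_open U'.
  move=> xi Hxi; have [S' HS'] := allwords_ex E1 N.
  exists S' => eta Heta w Hw; rewrite Heta ?HS' //; exact: Hxi.
have [y' [Oy' [U'y' Hny]]] := HTF g1 Hg1ne Hg1 U' oU' (fun w _ => iff_refl _).
have Hex : exists w, ~ (x w <-> y' w).
  apply: NNPP => Hno; apply: Hny.
  have Heq : forall w, x w <-> y' w by move=> w; apply: NNPP => H; apply: Hno; exists w.
  case: Hg1 => [Hr1 [[_ Hxg] Hth]]; split=> //; split; first by split=> //; apply/Heq.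
  move=> w; rewrite -Heq -Hth; rewrite /theta.
  by split; case=> sg Hsg ->; exists sg => //; apply/Heq.
have [w [Hw Hmin]] := min_ex Hex.
have HwN : N < size w.
  rewrite ltnNge; apply/negP => H; apply: Hw; rewrite -(U'y' w H); by [].
have [HOx' HOy'] := (HOx, Oy').
case: HOx => [xR [x1 [xD xL]]]; case: Oy' => [yR [y1 [yD yL]]].
have Hz : x w \/ y' w by case: (classic (x w)) => H; [left|right; apply: NNPP => H'; apply: Hw; split].
case: w Hw Hmin HwN Hz => [|sg beta] //= Hw Hmin HwN Hz.
case: beta Hw Hmin HwN Hz => [|t b'] Hw Hmin HwN Hz; first by move: HwN; rewrite /N.
have Hrw : reduced [:: sg, t & b'] by case: Hz => H; [apply: xR|apply: yR].
have Hb : x (t :: b') /\ y' (t :: b').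
  have Hiff : x (t :: b') <-> y' (t :: b') by apply: NNPP => H; apply: (Hmin (t :: b')) => //.
  case: Hz => H.
    have H' : x (t :: b') by have := xD _ H 1.
    by split=> //; apply: (proj1 Hiff).
  have H' : y' (t :: b') by have := yD _ H 1.
  by split=> //; apply: (proj2 Hiff).
have Hb' : x b' /\ y' b'.
  have Hiff : x b' <-> y' b' by apply: NNPP => H; apply: (Hmin b') => //=; lia.
  case: Hb => H _.
  have H' : x b' by have := xD _ H 1; rewrite /= drop0.
  by split=> //; apply: (proj1 Hiff).
have Hneq : ~ (forall sg0, xi_at x (t :: b') sg0 <-> xi_at y' (t :: b') sg0).
  move/(_ sg); rewrite /xi_at /wmul cat1s red_id //.
have [e [f [v [eX [X0 [[Hv HeX Hxi HX0 HeX0] [Hf Hfe xe yf nxf]]]]]]] :=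
  extract HC HOx' HOy' (proj1 Hb) (proj2 Hb) (proj1 Hb') (proj2 Hb') Hneq.
exists (ymod x y' ((e, true) :: t :: b') ((f, true) :: t :: b')).
split; first exact: (omega_mod HC HOx' HOy' (proj1 Hb) (proj2 Hb) Hv HeX Hxi HX0 HeX0 Hf Hfe xe yf nxf).
split.
  apply: HS => w Hw'; have := size_le_sumn Hw'; rewrite -/L => HwL.
  have HLb : L <= size b' by move: HwN; rewrite /N /=; lia.
  have K := leq_trans HwL HLb.
  rewrite /ymod; split.
    case=> [[]|[_ /cone_size]] //= H.
    by have := leq_ltn_trans K (ltn_trans (ltnSn _) H); rewrite ltnn.
  move=> H; left; split=> // /cone_size /= H2.
  by have := leq_trans H2 K; rewrite ltnNge leqnSn.
move=> g Hg Hst.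
have [Hgne Hgx] := Hgs g Hg.
by apply: Hgne; apply: (stab_break HOx' HOy' (proj1 Hb) yf nxf Hgx Hst).
Qed.
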